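(* Let $\alpha\in(1,\infty)$, let $p_X$ be a distribution on a finite set $\mathcal X$ and $p_{Y\mid X}$ a channel to a finite set $\mathcal Y$. Let $\tilde q^{(0)}_{Y\mid X}$ be an initial channel and for $k\ge0$ define $$r^{(k)}_{X\mid Y}(x\mid y)=\frac{p_X(x)\tilde q^{(k)}_{Y\mid X}(y\mid x)}{\sum_{x'}p_X(x')\tilde q^{(k)}_{Y\mid X}(y\mid x')},\qquad \tilde q^{(k+1)}_{Y\mid X}(y\mid x)=\frac{p_{Y\mid X}(y\mid x)r^{(k)}_{X\mid Y}(x\mid y)^{1-1/\alpha}}{\sum_{y'}p_{Y\mid X}(y'\mid x)r^{(k)}_{X\mid Y}(x\mid y')^{1-1/\alpha}}.$$ Then $\lim_{k\to\infty}\tilde F_\alpha^{\mathrm C}(\tilde q^{(k+1)}_{Y\mid X},r^{(k)}_{X\mid Y})=I_\alpha^{\mathrm C}(X;Y)$.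
   Context: $\log$ is natural, $D$ is the Kullback–Leibler divergence, and $D_\alpha(p\|q):=\frac{1}{\alpha-1}\log\sum_zp(z)^\alpha q(z)^{1-\alpha}$. The Augustin–Csiszár mutual information is $I_\alpha^{\mathrm C}(X;Y):=\min_{q_Y}\sum_xp_X(x)D_\alpha(p_{Y\mid X}(\cdot\mid x)\|q_Y)$. For a channel $\tilde q_{Y\mid X}$ and a reverse channel $r_{X\mid Y}$, $\tilde F_\alpha^{\mathrm C}(\tilde q_{Y\mid X},r_{X\mid Y}):=\frac{\alpha}{1-\alpha}D(p_X\tilde q_{Y\mid X}\|p_Xp_{Y\mid X})+\mathbb E^{p_X\tilde q_{Y\mid X}}[\log\frac{r_{X\mid Y}(X\mid Y)}{p_X(X)}]$. *)

(* Defs.v *)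
From HB Require Import structures.
From mathcomp Require Import all_boot all_order all_algebra.
From mathcomp Require Import all_classical all_reals all_analysis.
Set Implicit Arguments. Unset Strict Implicit. Unset Printing Implicit Defensive.
Import Order.TTheory GRing.Theory Num.Theory.
Local Open Scope ring_scope.
Local Open Scope classical_set_scope.

Section AC.
Variables (R : realType) (X Y : finType).

Definition probvec (T : finType) (P : T -> R) : Prop :=
  (forall t, 0 <= P t) /\ \sum_(t : T) P t = 1.

(* A channel W : X -> Y -> R, W x y = W(y|x). *)
Definition channel (W : X -> Y -> R) : Prop := forall x, probvec (W x).

(* Renyi divergence of order a > 1, extended-real valued:
   D_a(P||Q) = 1/(a-1) log sum_z P(z)^a Q(z)^(1-a), with 0*(anything)=0
   conventions, and +oo when P is not absolutely continuous w.r.t. Q. *)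
Definition renyi (a : R) (P Q : Y -> R) : \bar R :=
  if [exists z, (0 < P z) && (Q z == 0)] then +oo%E
  else ((a - 1)^-1 * ln (\sum_(z : Y) P z `^ a * Q z `^ (1 - a)))%:E.

(* Augustin--Csiszar mutual information: min over output distributions q_Y
   of sum_x p_X(x) D_a(p_{Y|X}(.|x) || q_Y)  (taken as an infimum in \bar R). *)
Definition IC (a : R) (p : X -> R) (W : X -> Y -> R) : \bar R :=
  ereal_inf [set (\sum_(x : X) ((p x)%:E * renyi a (W x) q))%E | q in probvec (T:=Y)].

(* Reverse channel r(x|y) = p(x) q(y|x) / sum_x' p(x') q(y|x'); stored as r x y. *)
Definition revch (p : X -> R) (q : X -> Y -> R) : X -> Y -> R :=
  fun x y => p x * q x y / \sum_(x' : X) p x' * q x' y.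

Definition updch (a : R) (W : X -> Y -> R) (r : X -> Y -> R) : X -> Y -> R :=
  fun x y => W x y * r x y `^ (1 - a^-1) /
             \sum_(y' : Y) W x y' * r x y' `^ (1 - a^-1).

Fixpoint qiter (a : R) (p : X -> R) (W q0 : X -> Y -> R) (k : nat) : X -> Y -> R :=
  match k with
  | 0 => q0
  | k'.+1 => updch a W (revch p (qiter a p W q0 k'))
  end.

Definition riter (a : R) (p : X -> R) (W q0 : X -> Y -> R) (k : nat) : X -> Y -> R :=
  revch p (qiter a p W q0 k).

(* D(p_X q || p_X W) = sum_{x,y} p(x) q(y|x) log (q(y|x)/W(y|x)).
   (Real-valued; only evaluated where q << W, which holds for the iterates.) *)
Definition KLjoint (p : X -> R) (q W : X -> Y -> R) : R :=
  \sum_(x : X) \sum_(y : Y) p x * q x y * ln (q x y / W x y).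

Definition FC (a : R) (p : X -> R) (W q r : X -> Y -> R) : R :=
  a / (1 - a) * KLjoint p q W +
  \sum_(x : X) \sum_(y : Y) p x * q x y * ln (r x y / p x).

End AC.

(* Main.v *)
Require Import Defs.
From HB Require Import structures.
From mathcomp Require Import all_boot all_order all_algebra.
From mathcomp Require Import all_classical all_reals all_analysis.
From mathcomp Require Import ring lra.
Import Order.TTheory GRing.Theory Num.Theory.
Local Open Scope ring_scope.
Local Open Scope classical_set_scope.
Set Implicit Arguments. Unset Strict Implicit.

Section Gen.
Variable R : realType.

Lemma lnle1 (u : R) : 0 < u -> ln u <= u - 1.
Proof.
move=> u0; have := @le_ln1Dx R (u - 1).
have -> : 1 + (u - 1) = u by ring.
apply; lra.
Qed.

Lemma gibbs (A B : R) : 0 <= A -> 0 <= B -> (0 < A -> 0 < B) ->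
  A - B <= A * ln (A / B).
Proof.
move=> A0 B0 AB; have [A00|Ap] := eqVneq A 0.
  by rewrite A00 mul0r sub0r oppr_le0.
have Ap' : 0 < A by rewrite lt_neqAle eq_sym Ap A0.
have Bp := AB Ap'.
have h := @lnle1 (B / A) (divr_gt0 Bp Ap').
have e : A / B = (B / A)^-1 by rewrite invf_div.
rewrite e lnV ?posrE ?divr_gt0 //.
have e2 : A * (B / A) = B by field; rewrite (negbTE Ap) .
move: h e2; set t := B / A; set l := ln t => h e2.
nra.
Qed.

Lemma hell (A B : R) : 0 <= A -> 0 <= B -> (0 < A -> 0 < B) ->
  2 * (A - Num.sqrt (A * B)) <= A * ln (A / B).
Proof.
move=> A0 B0 AB; have [A00|Ap] := eqVneq A 0.
  by rewrite A00 !mul0r sqrtr0 subr0 mulr0.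
have Ap' : 0 < A by rewrite lt_neqAle eq_sym Ap A0.
have Bp := AB Ap'.
set s := Num.sqrt (B / A).
have s0 : 0 < s by rewrite sqrtr_gt0 divr_gt0.
have ss : s * s = B / A by rewrite -expr2 sqr_sqrtr // divr_ge0.
have h := @lnle1 s s0.
have e : A / B = (B / A)^-1 by rewrite invf_div.
have lB : ln (B / A) = ln s + ln s by rewrite -ss lnM.
have sq : Num.sqrt (A * B) = A * s.
  have -> : A * B = (A ^+ 2) * (B / A) by field; rewrite (negbTE Ap).
  by rewrite sqrtrM ?sqrtr_sqr ?ger0_norm // sqr_ge0.
rewrite e lnV ?posrE ?divr_gt0 // lB sq.
move: h; set l := ln s => h.
nra.
Qed.

Lemma sq4 (A B : R) : 0 <= A <= 1 -> 0 <= B <= 1 ->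
  (A - B) ^+ 2 <= 4 * (Num.sqrt A - Num.sqrt B) ^+ 2.
Proof.
move=> /andP[A0 A1] /andP[B0 B1].
have eA : Num.sqrt A ^+ 2 = A by rewrite sqr_sqrtr.
have eB : Num.sqrt B ^+ 2 = B by rewrite sqr_sqrtr.
have sA0 := sqrtr_ge0 A; have sB0 := sqrtr_ge0 B.
have sA1 : Num.sqrt A <= 1 by rewrite -sqrtr1 ler_sqrt.
have sB1 : Num.sqrt B <= 1 by rewrite -sqrtr1 ler_sqrt.
rewrite -{1}eA -{1}eB.
move: sA0 sB0 sA1 sB1; set u := Num.sqrt A; set v := Num.sqrt B => *.
have -> : (u ^+ 2 - v ^+ 2) ^+ 2 = (u - v) ^+ 2 * (u + v) ^+ 2 by ring.
have h : (u + v) ^+ 2 <= 4.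
  have -> : (4 : R) = 2 ^+ 2 by rewrite expr2; lra.
  rewrite ler_sqr ?nnegrE; lra.
have := mulr_ge0 (sqr_ge0 (u - v)) (ltac:(by rewrite subr_ge0) : 0 <= 4 - (u + v) ^+ 2).
nra.
Qed.

Lemma sum_ge_term (I : finType) (F : I -> R) i :
  (forall j, 0 <= F j) -> F i <= \sum_j F j.
Proof.
by move=> F0; rewrite (bigD1 i) //= lerDl sumr_ge0.
Qed.

Lemma sqid (u v : R) : 0 <= u -> 0 <= v ->
  (Num.sqrt u - Num.sqrt v) ^+ 2 + (u - v) = 2 * (u - Num.sqrt (u * v)).
Proof.
move=> u0 v0; rewrite sqrtrM //.
have e1 := sqr_sqrtr u0; have e2 := sqr_sqrtr v0.
move: (Num.sqrt u) (Num.sqrt v) e1 e2 => s t e1 e2.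
rewrite -e1 -e2; ring.
Qed.

End Gen.

Section Main.
Variables (R : realType) (X Y : finType) (a : R) (p : X -> R) (W q0 : X -> Y -> R).
Hypotheses (ha : 1 < a) (hp : probvec p) (hW : channel W) (hq0 : channel q0)
  (hsupp : forall x y, 0 < W x y -> 0 < q0 x y).

Local Notation q := (qiter a p W q0).
Local Notation r := (riter a p W q0).
Local Notation bet := (1 - a^-1).

Definition Pm k y := \sum_x p x * q k x y.
Definition Zk k x := \sum_y W x y * r k x y `^ bet.

Lemma qS k x y : q k.+1 x y = W x y * r k x y `^ bet / Zk k x.
Proof. by []. Qed.
Lemma rE k x y : r k x y = p x * q k x y / Pm k y.
Proof. by []. Qed.

Lemma a0 : 0 < a. Proof. by apply: lt_trans ha. Qed.
Lemma ainv1 : a^-1 < 1. Proof. by rewrite invf_lt1 ?a0. Qed.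
Lemma ainv0 : 0 < a^-1. Proof. by rewrite invr_gt0 a0. Qed.
Lemma bet0 : 0 <= bet. Proof. have := ainv1; lra. Qed.
Lemma bet1 : bet <= 1. Proof. have := ainv0; lra. Qed.

Lemma p_ge0 x : 0 <= p x. Proof. exact: hp.1. Qed.
Lemma psum : \sum_x p x = 1. Proof. exact: hp.2. Qed.
Lemma W_ge0 x y : 0 <= W x y. Proof. exact: (hW x).1. Qed.
Lemma Wsum x : \sum_y W x y = 1. Proof. exact: (hW x).2. Qed.
Lemma pNS x : ~~ (0 < p x) -> p x = 0.
Proof. by move=> h; apply/eqP; rewrite eq_le p_ge0 andbT leNgt. Qed.
Lemma p_le1 x : p x <= 1.
Proof. by rewrite -psum; exact: (sum_ge_term _ p_ge0). Qed.
Lemma W_le1 x y : W x y <= 1.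
Proof. by rewrite -(Wsum x); exact: (sum_ge_term _ (W_ge0 x)). Qed.
Lemma Wex x : exists y, 0 < W x y.
Proof.
have h : \sum_y W x y <> 0 by rewrite Wsum; apply/eqP; rewrite oner_eq0.
have [y /andP[_ hy]] := psumr_neq0P (fun y _ => W_ge0 x y) h.
by exists y.
Qed.

Definition fmu (t : X * Y) := Num.min (q0 t.1 t.2) ((W t.1 t.2 * p t.1) `^ a).
Definition Pmu (t : X * Y) := (0 < p t.1) && (0 < W t.1 t.2).
Definition mu := (1 + \sum_(t | Pmu t) (fmu t)^-1)^-1.

Lemma fmu_gt0 t : Pmu t -> 0 < fmu t.
Proof.
case/andP=> h1 h2; rewrite /fmu lt_min hsupp //=.
by rewrite powR_gt0 // mulr_gt0.
Qed.

Lemma Ssum_ge0 : 0 <= \sum_(t | Pmu t) (fmu t)^-1.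
Proof. by apply: sumr_ge0 => t /fmu_gt0 h; rewrite invr_ge0 ltW. Qed.

Lemma mu_gt0 : 0 < mu.
Proof. rewrite /mu invr_gt0; have := Ssum_ge0; lra. Qed.

Lemma mu_le t : Pmu t -> mu <= fmu t.
Proof.
move=> Pt; have f0 := fmu_gt0 Pt.
rewrite /mu -[fmu t]invrK lef_pV2 ?posrE ?invr_gt0 //; last first.
  have := Ssum_ge0; lra.
have : (fmu t)^-1 <= \sum_(t | Pmu t) (fmu t)^-1.
  rewrite (bigD1 t) //= lerDl; apply: sumr_ge0 => i /andP[/fmu_gt0 h _].
  by rewrite invr_ge0 ltW.
lra.
Qed.

Lemma mu_q0 x y : 0 < p x -> 0 < W x y -> mu <= q0 x y.
Proof.
move=> h1 h2; have := @mu_le (x, y); rewrite /Pmu /= h1 h2 => /(_ isT).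
by rewrite le_min => /andP[].
Qed.

Lemma mu_c x y : 0 < p x -> 0 < W x y -> mu <= (W x y * p x) `^ a.
Proof.
move=> h1 h2; have := @mu_le (x, y); rewrite /Pmu /= h1 h2 => /(_ isT).
by rewrite le_min => /andP[].
Qed.

Definition Inv k := [/\ forall x y, 0 <= q k x y,
  forall x, 0 < p x -> \sum_y q k x y = 1 &
  forall x y, 0 < p x -> 0 < W x y -> mu <= q k x y].

Section Derived.
Variable k : nat.
Hypothesis H : Inv k.

Lemma q_ge0 x y : 0 <= q k x y. Proof. by case: H. Qed.
Lemma q_sum x : 0 < p x -> \sum_y q k x y = 1. Proof. by case: H => _ h _; apply: h. Qed.
Lemma q_mu x y : 0 < p x -> 0 < W x y -> mu <= q k x y. Proof. by case: H => _ _ h; apply: h. Qed.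
Lemma q_gt0 x y : 0 < p x -> 0 < W x y -> 0 < q k x y.
Proof. by move=> h1 h2; apply: lt_le_trans mu_gt0 (q_mu h1 h2). Qed.
Lemma q_le1 x y : 0 < p x -> q k x y <= 1.
Proof. by move=> px; rewrite -(q_sum px); exact: (sum_ge_term _ (q_ge0 x)). Qed.
Lemma pq_ge0 x y : 0 <= p x * q k x y.
Proof. by rewrite mulr_ge0 ?p_ge0 ?q_ge0. Qed.
Lemma pq_lep x y : p x * q k x y <= p x.
Proof.
case: (boolP (0 < p x)) => px; first by rewrite ler_piMr ?p_ge0 ?q_le1.
by rewrite pNS // mul0r.
Qed.
Lemma Pm_ge0 y : 0 <= Pm k y.
Proof. by apply: sumr_ge0 => x _; apply: pq_ge0. Qed.
Lemma Pm_le1 y : Pm k y <= 1.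
Proof. by rewrite /Pm -psum; apply: ler_sum => x _; apply: pq_lep. Qed.
Lemma pq_lePm x y : p x * q k x y <= Pm k y.
Proof. by rewrite /Pm; apply: (@sum_ge_term _ _ (fun x => p x * q k x y)) => z; apply: pq_ge0. Qed.
Lemma Pm_cases y : Pm k y = 0 \/ 0 < Pm k y.
Proof. by have := Pm_ge0 y; rewrite le_eqVlt => /orP[/eqP<-|->]; [left|right]. Qed.
Lemma r_ge0 x y : 0 <= r k x y.
Proof. by rewrite rE divr_ge0 ?pq_ge0 ?Pm_ge0. Qed.
Lemma r_le1 x y : r k x y <= 1.
Proof.
rewrite rE; case: (Pm_cases y) => [->|Pp]; first by rewrite invr0 mulr0.
by rewrite ler_pdivrMr // mul1r pq_lePm.
Qed.
Lemma pq_ler x y : p x * q k x y <= r k x y.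
Proof.
case: (Pm_cases y) => [P0|Pp].
  by apply: le_trans (r_ge0 x y); rewrite -P0 pq_lePm.
by rewrite rE ler_pdivlMr // ler_piMr ?pq_ge0 ?Pm_le1.
Qed.
Lemma sumr_le1 y : \sum_x r k x y <= 1.
Proof.
rewrite /riter /revch -mulr_suml -/(Pm k y).
case: (Pm_cases y) => [->|Pp]; first by rewrite invr0 mulr0.
by rewrite divff ?gt_eqF.
Qed.
Lemma r_gt0 x y : 0 < p x -> 0 < W x y -> 0 < r k x y.
Proof.
move=> h1 h2; apply: lt_le_trans (pq_ler x y).
by rewrite mulr_gt0 ?q_gt0.
Qed.
Lemma Z_ge0 x : 0 <= Zk k x.
Proof. by apply: sumr_ge0 => y _; rewrite mulr_ge0 ?W_ge0 ?powR_ge0. Qed.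
Lemma rb_le1 x y : r k x y `^ bet <= 1.
Proof.
have := @ge0_ler_powR R bet bet0 (r k x y) 1; rewrite !nnegrE powR1.
by apply; rewrite ?r_ge0 ?r_le1.
Qed.
Lemma Z_le1 x : Zk k x <= 1.
Proof.
rewrite /Zk -[X in _ <= X](Wsum x); apply: ler_sum => y _.
by rewrite ler_piMr ?W_ge0 ?rb_le1.
Qed.
Lemma Z_gt0 x : 0 < p x -> 0 < Zk k x.
Proof.
move=> px; have [y Wy] := Wex x.
apply: lt_le_trans (@sum_ge_term _ _ (fun y => W x y * r k x y `^ bet) y _).
  by rewrite mulr_gt0 // powR_gt0 // r_gt0.
by move=> z; rewrite mulr_ge0 ?W_ge0 ?powR_ge0.
Qed.
End Derived.

Lemma inv_step k : Inv k -> Inv k.+1.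
Proof.
move=> H; split.
- move=> x y; rewrite qS; apply: divr_ge0; last exact: Z_ge0.
  by rewrite mulr_ge0 ?W_ge0 ?powR_ge0.
- move=> x px; under eq_bigr do rewrite qS.
  by rewrite -mulr_suml divff // gt_eqF // Z_gt0.
- move=> x y px Wy; rewrite qS.
  have z0 := Z_gt0 H px; have z1 := Z_le1 H x.
  have h1 : W x y * r k x y `^ bet <= W x y * r k x y `^ bet / Zk k x.
    by rewrite ler_pdivlMr // ler_piMr // mulr_ge0 ?W_ge0 ?powR_ge0.
  have h2 : (p x * mu) `^ bet <= r k x y `^ bet.
    have := @ge0_ler_powR R bet bet0 (p x * mu) (r k x y); rewrite !nnegrE.
    apply; rewrite ?r_ge0 ?mulr_ge0 ?p_ge0 ?(ltW mu_gt0) //.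
    apply: le_trans (pq_ler H x y).
    by rewrite ler_wpM2l ?p_ge0 ?(q_mu H px Wy).
  suff h3 : mu <= W x y * (p x * mu) `^ bet.
    by apply: le_trans h3 (le_trans (ler_wpM2l (W_ge0 x y) h2) h1).
  rewrite powRM ?p_ge0 ?(ltW mu_gt0) // mulrA.
  have h4 : W x y * p x <= W x y * p x `^ bet.
    by rewrite ler_wpM2l ?W_ge0 // ger1_powR ?px ?p_le1 ?bet1.
  apply: le_trans (ler_wpM2r (powR_ge0 _ _) h4).
  have c0 : 0 < W x y * p x by rewrite mulr_gt0.
  have hc := mu_c px Wy.
  move: hc c0; set c := W x y * p x => hc c0.
  rewrite -ler_ln ?posrE ?mu_gt0 ?mulr_gt0 ?powR_gt0 ?mu_gt0 //.
  rewrite lnM ?posrE ?powR_gt0 ?mu_gt0 // ln_powR.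
  have {}hc : ln mu <= a * ln c.
    by rewrite -ln_powR ler_ln ?posrE ?mu_gt0 ?powR_gt0.
  move: hc; set L := ln mu; set M := ln c => hc.
  have := ler_wpM2l (ltW ainv0) hc; rewrite mulrA mulVf ?gt_eqF ?a0 // mul1r.
  lra.
Qed.

Lemma inv k : Inv k.
Proof.
elim: k => [|k IH]; last exact: inv_step.
split => /=.
- by move=> x y; apply: (hq0 x).1.
- by move=> x _; apply: (hq0 x).2.
- by move=> x y; apply: mu_q0.
Qed.


Lemma q0W k x y : W x y = 0 -> q k.+1 x y = 0.
Proof. by move=> h; rewrite qS h !mul0r. Qed.

Lemma Pm_gt0 k x y : 0 < p x -> 0 < W x y -> 0 < Pm k y.
Proof.
move=> h1 h2; apply: lt_le_trans (pq_lePm (inv k) x y).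
by rewrite mulr_gt0 // (q_gt0 (inv k)).
Qed.

Lemma lnq k x y : 0 < p x -> 0 < W x y ->
  ln (q k.+1 x y) = ln (W x y) + bet * ln (r k x y) - ln (Zk k x).
Proof.
move=> h1 h2; have H := inv k.
rewrite qS ln_div ?posrE ?mulr_gt0 ?powR_gt0 ?(r_gt0 H) ?(Z_gt0 H) //.
by rewrite lnM ?posrE ?powR_gt0 ?(r_gt0 H) // ln_powR.
Qed.

Lemma lnr k x y : 0 < p x -> 0 < W x y ->
  ln (r k x y) = ln (p x) + ln (q k x y) - ln (Pm k y).
Proof.
move=> h1 h2; have H := inv k.
rewrite rE ln_div ?posrE ?mulr_gt0 ?(q_gt0 H) ?(Pm_gt0 k h1 h2) //.
by rewrite lnM ?posrE ?(q_gt0 H).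
Qed.

Lemma HS k (f : X -> R) :
  \sum_x \sum_y p x * q k x y * f x = \sum_x p x * f x.
Proof.
apply: eq_bigr => x _; case: (boolP (0 < p x)) => px.
  by rewrite -mulr_suml -mulr_sumr (q_sum (inv k) px) mulr1.
by rewrite pNS // mul0r; apply: big1 => y _; rewrite !mul0r.
Qed.

Lemma tcases x y : p x = 0 \/ (0 < p x /\ W x y = 0) \/ (0 < p x /\ 0 < W x y).
Proof.
case: (boolP (0 < p x)) => px; last by left; rewrite pNS.
right; have := W_ge0 x y; rewrite le_eqVlt => /orP[/eqP<-|->].
  by left. by right.
Qed.

Definition G k := \sum_x p x * (a / (a - 1) * ln (Zk k x) - ln (p x)).

Lemma a1 : a - 1 != 0. Proof. by rewrite subr_eq0 gt_eqF. Qed.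
Lemma a1' : 1 - a != 0. Proof. by rewrite subr_eq0 lt_eqF. Qed.
Lemma an0 : a != 0. Proof. by rewrite gt_eqF // a0. Qed.

Lemma FC_term k x y :
  a / (1 - a) * (p x * q k.+1 x y * ln (q k.+1 x y / W x y)) +
  p x * q k.+1 x y * ln (r k x y / p x) =
  p x * q k.+1 x y * (a / (a - 1) * ln (Zk k x) - ln (p x)).
Proof.
case: (tcases x y) => [p0|[[px W0]|[px Wp]]].
- by rewrite p0 !mul0r mulr0 add0r.
- by rewrite (q0W k W0) !(mulr0, mul0r) addr0.
have H1 := inv k.+1; have H0 := inv k.
rewrite ln_div ?posrE ?(q_gt0 H1) // ln_div ?posrE ?(r_gt0 H0) //.
rewrite (lnq k px Wp).
move: (ln (W x y)) (ln (r k x y)) (ln (Zk k x)) (ln (p x)) => lW lr lZ lp.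
by field; rewrite ?a1 ?a1' ?an0.
Qed.

Lemma FC_G k : FC a p W (q k.+1) (r k) = G k.
Proof.
rewrite /G -(HS k.+1) /FC /KLjoint mulr_sumr -big_split.
apply: eq_bigr => x _; rewrite mulr_sumr -big_split.
by apply: eq_bigr => y _; exact: FC_term.
Qed.

Definition T (Q : Y -> R) x := \sum_y W x y `^ a * Q y `^ (1 - a).

Lemma T_gt0 Q x y : (forall y, 0 <= Q y) -> 0 < W x y -> 0 < Q y -> 0 < T Q x.
Proof.
move=> Q0 h1 h2; apply: lt_le_trans (@sum_ge_term _ _ (fun y => W x y `^ a * Q y `^ (1 - a)) y _).
  by rewrite mulr_gt0 ?powR_gt0.
by move=> z; rewrite mulr_ge0 ?powR_ge0.
Qed.

Lemma pq_pos k x y : 0 < p x * q k.+1 x y -> 0 < p x /\ 0 < W x y.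
Proof.
case: (tcases x y) => [p0|[[px W0]|[px Wp]]] //.
- by rewrite p0 mul0r ltxx.
- by rewrite (q0W k W0) mulr0 ltxx.
Qed.

Lemma qpos_W k x y : 0 < q k.+1 x y -> 0 < W x y.
Proof.
have := W_ge0 x y; rewrite le_eqVlt => /orP[/eqP W0|//].
by rewrite (q0W k (esym W0)) ltxx.
Qed.

Lemma HS1 k : \sum_x \sum_y p x * q k x y = 1.
Proof.
rewrite -psum; apply: eq_bigr => x _; case: (boolP (0 < p x)) => px.
  by rewrite -mulr_sumr (q_sum (inv k) px) mulr1.
by rewrite pNS //; apply: big1 => y _; rewrite mul0r.
Qed.

Section UB.
Variable Q : Y -> R.
Hypothesis Q0 : forall y, 0 <= Q y.
Hypothesis Qs : \sum_y Q y = 1.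
Hypothesis hQ : forall x y, 0 < p x -> 0 < W x y -> 0 < Q y.

Lemma U_term k x y :
  p x * q k.+1 x y * (a / (a - 1) * ln (Zk k x) - ln (p x)) =
  p x * q k.+1 x y * ((a - 1)^-1 * ln (T Q x))
  - (a - 1)^-1 * (p x * (q k.+1 x y * ln (q k.+1 x y / (W x y `^ a * Q y `^ (1 - a) / T Q x))))
  - p x * q k.+1 x y * ln (p x * q k.+1 x y / (Q y * r k x y)).
Proof.
case: (tcases x y) => [p0|[[px W0]|[px Wp]]].
- by rewrite p0 !(mul0r, mulr0, subr0).
- by rewrite (q0W k W0) !(mul0r, mulr0, subr0).
have H1 := inv k.+1; have H0 := inv k.
have Qp := hQ px Wp; have Tp := T_gt0 Q0 Wp Qp.
have qp := q_gt0 H1 px Wp; have rp := r_gt0 H0 px Wp.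
have lq := lnq k px Wp.
move: (q k.+1 x y) (r k x y) qp rp lq => qv rv qp rp lq.
rewrite ln_div ?posrE ?divr_gt0 ?mulr_gt0 ?powR_gt0 //.
rewrite ln_div ?posrE ?mulr_gt0 ?powR_gt0 //.
rewrite lnM ?posrE ?powR_gt0 // !ln_powR.
rewrite ln_div ?posrE ?mulr_gt0 ?powR_gt0 //.
rewrite !lnM ?posrE // lq.
move: (ln (W x y)) (ln rv) (ln (Zk k x)) (ln (p x)) (ln (Q y)) (ln (T Q x)) => lW lr lZ lp lQ lT.
by field; rewrite ?a1 ?a1' ?an0.
Qed.

Lemma KLm_ge0 k x : 0 < p x ->
  0 <= \sum_y q k.+1 x y * ln (q k.+1 x y / (W x y `^ a * Q y `^ (1 - a) / T Q x)).
Proof.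
move=> px; have H1 := inv k.+1.
have [y0 Wy0] := Wex x.
have Tp := T_gt0 Q0 Wy0 (hQ px Wy0).
have hs : \sum_y (q k.+1 x y - W x y `^ a * Q y `^ (1 - a) / T Q x) = 0.
  by rewrite sumrB (q_sum H1 px) -mulr_suml divff ?gt_eqF // subrr.
rewrite -[X in X <= _]hs; apply: ler_sum => y _; apply: gibbs.
- exact: q_ge0.
- by rewrite divr_ge0 ?mulr_ge0 ?powR_ge0 // ltW.
- move=> /qpos_W Wp; have Qp := hQ px Wp.
  by rewrite divr_gt0 ?mulr_gt0 ?powR_gt0.
Qed.

Lemma C_ge0 k :
  0 <= \sum_x \sum_y p x * q k.+1 x y * ln (p x * q k.+1 x y / (Q y * r k x y)).
Proof.
have H1 := inv k.+1; have H0 := inv k.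
have hs : 0 <= \sum_x \sum_y (p x * q k.+1 x y - Q y * r k x y).
  under eq_bigr do rewrite sumrB.
  rewrite sumrB HS1 subr_ge0 exchange_big /=.
  rewrite -Qs; apply: ler_sum => y _; rewrite -mulr_sumr.
  by rewrite ler_piMr ?Q0 ?(sumr_le1 H0).
apply: le_trans hs _; apply: ler_sum => x _; apply: ler_sum => y _.
apply: gibbs.
- exact: pq_ge0.
- by rewrite mulr_ge0 ?Q0 ?(r_ge0 H0).
- move=> /pq_pos [px Wp]; have Qp := hQ px Wp.
  by rewrite mulr_gt0 ?(r_gt0 H0).
Qed.

Lemma U_real k : G k <= \sum_x p x * ((a - 1)^-1 * ln (T Q x)).
Proof.
have e : G k = \sum_x \sum_y (
  p x * q k.+1 x y * ((a - 1)^-1 * ln (T Q x))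
  - (a - 1)^-1 * (p x * (q k.+1 x y * ln (q k.+1 x y / (W x y `^ a * Q y `^ (1 - a) / T Q x))))
  - p x * q k.+1 x y * ln (p x * q k.+1 x y / (Q y * r k x y))).
  rewrite /G -(HS k.+1); apply: eq_bigr => x _; apply: eq_bigr => y _.
  exact: U_term.
rewrite e; under eq_bigr do rewrite !sumrB.
rewrite !sumrB (HS k.+1 (fun x => (a - 1)^-1 * ln (T Q x))).
have hB : 0 <= \sum_x \sum_y (a - 1)^-1 * (p x * (q k.+1 x y *
   ln (q k.+1 x y / (W x y `^ a * Q y `^ (1 - a) / T Q x)))).
  apply: sumr_ge0 => x _; rewrite -mulr_sumr -mulr_sumr.
  apply: mulr_ge0; first by rewrite invr_ge0 subr_ge0 ltW.
  case: (boolP (0 < p x)) => px; last by rewrite pNS // mul0r.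
  by rewrite mulr_ge0 ?p_ge0 ?KLm_ge0.
have hC := C_ge0 k.
lra.
Qed.

End UB.

Lemma sum_renyi_good (Q : Y -> R) :
  (forall x y, 0 < p x -> 0 < W x y -> 0 < Q y) ->
  (\sum_x (p x)%:E * renyi a (W x) Q)%E = (\sum_x p x * ((a - 1)^-1 * ln (T Q x)))%:E.
Proof.
move=> hQ; rewrite -sumEFin; apply: eq_bigr => x _.
case: (boolP (0 < p x)) => px; last by rewrite pNS // mul0e mul0r.
rewrite /renyi; have -> : [exists z, (0 < W x z) && (Q z == 0)] = false.
  apply/existsP => -[z /andP[Wz /eqP Qz]].
  by have := hQ x z px Wz; rewrite Qz ltxx.
by rewrite -EFinM.
Qed.

Lemma U_E k : ((G k)%:E <= IC a p W)%E.
Proof.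
apply/ereal_infP => _ [Q [Q0 Qs] <-].
case: (pselect (exists x, 0 < p x /\ exists y, 0 < W x y /\ Q y = 0)).
  move=> [x [px [y [Wy Qy]]]].
  suff -> : (\sum_x (p x)%:E * renyi a (W x) Q)%E = +oo%E by rewrite leey.
  apply/esum_eqyP.
    move=> i _; rewrite /renyi; case: ifP => _.
      have := p_ge0 i; rewrite le_eqVlt => /orP[/eqP<-|pp].
        by rewrite mul0e.
      by rewrite gt0_muley ?lte_fin.
    by rewrite -EFinM.
  exists x; split => //.
  rewrite /renyi; have -> : [exists z, (0 < W x z) && (Q z == 0)] = true.
    by apply/existsP; exists y; rewrite Wy Qy eqxx.
  by rewrite gt0_muley ?lte_fin.
move=> nb.
have hQ : forall x y, 0 < p x -> 0 < W x y -> 0 < Q y.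
  move=> x y px Wy; have := Q0 y; rewrite le_eqVlt => /orP[/eqP Qy|//].
  by exfalso; apply: nb; exists x; split => //; exists y; split.
rewrite sum_renyi_good // lee_fin.
exact: (U_real Q0 Qs hQ k).
Qed.

Definition Sx k x := \sum_y q k.+2 x y `^ a * q k.+1 x y `^ (1 - a).
Definition E k := \sum_x p x * ((a - 1)^-1 * ln (Sx k x)).

Lemma L_term k x y : 0 < p x ->
  W x y `^ a * Pm k.+1 y `^ (1 - a) =
  Zk k.+1 x `^ a * p x `^ (1 - a) * (q k.+2 x y `^ a * q k.+1 x y `^ (1 - a)).
Proof.
move=> px; case: (tcases x y) => [p0|[[_ W0]|[_ Wp]]].
- by move: px; rewrite p0 ltxx.
- by rewrite W0 (q0W k.+1 W0) !powR0 ?an0 // !(mul0r, mulr0).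
have H1 := inv k.+1; have H2 := inv k.+2.
have q1 := q_gt0 H1 px Wp; have q2 := q_gt0 H2 px Wp.
have Pp := Pm_gt0 k.+1 px Wp; have Zp := Z_gt0 H1 px.
have lq := lnq k.+1 px Wp; have lr := lnr k.+1 px Wp.
move: (q k.+2 x y) (q k.+1 x y) (r k.+1 x y) (Pm k.+1 y) q1 q2 Pp lq lr =>
  qb qa rv P q1 q2 Pp lq lr.
apply: ln_inj; rewrite ?posrE ?mulr_gt0 ?powR_gt0 //.
rewrite !lnM ?posrE ?mulr_gt0 ?powR_gt0 // !ln_powR lq lr.
by field; rewrite ?a1 ?a1' ?an0.
Qed.

Lemma Sx_gt0 k x : 0 < p x -> 0 < Sx k x.
Proof.
move=> px; have [y Wy] := Wex x.
apply: lt_le_trans (@sum_ge_term _ _ (fun y => q k.+2 x y `^ a * q k.+1 x y `^ (1 - a)) y _).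
  by rewrite mulr_gt0 ?powR_gt0 ?(q_gt0 (inv k.+1)) ?(q_gt0 (inv k.+2)).
by move=> z; rewrite mulr_ge0 ?powR_ge0.
Qed.

Lemma L_xterm k x :
  p x * ((a - 1)^-1 * ln (T (Pm k.+1) x)) =
  p x * (a / (a - 1) * ln (Zk k.+1 x) - ln (p x)) + p x * ((a - 1)^-1 * ln (Sx k x)).
Proof.
case: (boolP (0 < p x)) => px; last by rewrite pNS // !mul0r addr0.
have -> : T (Pm k.+1) x = Zk k.+1 x `^ a * p x `^ (1 - a) * Sx k x.
  by rewrite /T /Sx mulr_sumr; apply: eq_bigr => y _; rewrite L_term.
have Zp := Z_gt0 (inv k.+1) px; have Sp := Sx_gt0 k px.
rewrite !lnM ?posrE ?mulr_gt0 ?powR_gt0 // !ln_powR.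
move: (ln (Zk k.+1 x)) (ln (p x)) (ln (Sx k x)) => lZ lp lS.
by field; rewrite ?a1 ?a1' ?an0.
Qed.

Lemma L_E k : (IC a p W <= (G k.+1 + E k)%:E)%E.
Proof.
apply: ereal_inf_lbound; exists (Pm k.+1).
  split; first by move=> y; exact: (Pm_ge0 (inv k.+1) y).
  by rewrite /Pm exchange_big; exact: (HS1 k.+1).
rewrite sum_renyi_good; last by move=> x y px Wy; exact: (Pm_gt0 k.+1 px Wy).
congr (_%:E); rewrite /G /E -big_split; apply: eq_bigr => x _.
exact: L_xterm.
Qed.

Definition KL k x := \sum_y q k.+1 x y * ln (q k.+1 x y / q k.+2 x y).
Definition D1 k := \sum_x \sum_y p x * q k.+1 x y * ln (r k.+1 x y / r k x y).
Definition gam := a / (a - 1).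

Lemma M_term k x y :
  p x * q k.+1 x y * (a / (a - 1) * ln (Zk k.+1 x) - ln (p x))
  - p x * q k.+1 x y * (a / (a - 1) * ln (Zk k x) - ln (p x)) =
  p x * q k.+1 x y * ln (r k.+1 x y / r k x y)
  + a / (a - 1) * (p x * (q k.+1 x y * ln (q k.+1 x y / q k.+2 x y))).
Proof.
case: (tcases x y) => [p0|[[px W0]|[px Wp]]].
- by rewrite p0 !(mul0r, mulr0, subr0, addr0).
- by rewrite (q0W k W0) !(mul0r, mulr0, subr0, addr0).
have H0 := inv k; have H1 := inv k.+1; have H2 := inv k.+2.
have q1 := q_gt0 H1 px Wp; have q2 := q_gt0 H2 px Wp.
have r0 := r_gt0 H0 px Wp; have r1 := r_gt0 H1 px Wp.
have l1 := lnq k px Wp; have l2 := lnq k.+1 px Wp.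
move: (q k.+2 x y) (q k.+1 x y) (r k.+1 x y) (r k x y) q1 q2 r0 r1 l1 l2 =>
  qb qa rb ra q1 q2 r0 r1 l1 l2.
rewrite !ln_div ?posrE // l1 l2.
move: (ln (W x y)) (ln ra) (ln rb) (ln (Zk k x)) (ln (Zk k.+1 x)) (ln (p x)) => lW lra lrb lZ lZ' lp.
by field; rewrite ?a1 ?a1' ?an0.
Qed.

Lemma M_eq k : G k.+1 - G k = D1 k + gam * \sum_x p x * KL k x.
Proof.
rewrite /G -(HS k.+1 (fun x => a / (a - 1) * ln (Zk k.+1 x) - ln (p x))).
rewrite -(HS k.+1 (fun x => a / (a - 1) * ln (Zk k x) - ln (p x))) -sumrB.
under eq_bigr do rewrite -sumrB.
transitivity (\sum_x \sum_y (p x * q k.+1 x y * ln (r k.+1 x y / r k x y)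
  + a / (a - 1) * (p x * (q k.+1 x y * ln (q k.+1 x y / q k.+2 x y))))).
  by apply: eq_bigr => x _; apply: eq_bigr => y _; exact: M_term.
under eq_bigr do rewrite big_split.
rewrite big_split /D1 /KL /gam; congr (_ + _).
rewrite mulr_sumr; apply: eq_bigr => x _.
by rewrite !mulr_sumr.
Qed.

Lemma D1_ge0 k : 0 <= D1 k.
Proof.
have H0 := inv k; have H1 := inv k.+1.
have hs : 0 <= \sum_x \sum_y (p x * q k.+1 x y - Pm k.+1 y * r k x y).
  under eq_bigr do rewrite sumrB.
  rewrite sumrB HS1 subr_ge0 exchange_big /=.
  have <- : \sum_y Pm k.+1 y = 1 by rewrite /Pm exchange_big; exact: (HS1 k.+1).
  apply: ler_sum => y _; rewrite -mulr_sumr.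
  by rewrite ler_piMr ?(Pm_ge0 H1) ?(sumr_le1 H0).
apply: le_trans hs _; apply: ler_sum => x _; apply: ler_sum => y _.
have -> : r k.+1 x y / r k x y = p x * q k.+1 x y / (Pm k.+1 y * r k x y).
  by rewrite [r k.+1 x y]rE -mulrA -invfM.
apply: gibbs.
- exact: pq_ge0.
- by rewrite mulr_ge0 ?(Pm_ge0 H1) ?(r_ge0 H0).
- move=> /pq_pos [px Wp].
  by rewrite mulr_gt0 ?(r_gt0 H0) ?(Pm_gt0 k.+1 px Wp).
Qed.

Lemma KL_sq k x : 0 < p x ->
  \sum_y (Num.sqrt (q k.+1 x y) - Num.sqrt (q k.+2 x y)) ^+ 2 <= KL k x.
Proof.
move=> px; have H1 := inv k.+1; have H2 := inv k.+2.
have e : \sum_y (Num.sqrt (q k.+1 x y) - Num.sqrt (q k.+2 x y)) ^+ 2 =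
  \sum_y 2 * (q k.+1 x y - Num.sqrt (q k.+1 x y * q k.+2 x y)).
  have h0 : \sum_y (q k.+1 x y - q k.+2 x y) = 0.
    by rewrite sumrB (q_sum H1 px) (q_sum H2 px) subrr.
  rewrite -[LHS]addr0 -[X in _ + X]h0 -big_split; apply: eq_bigr => y _.
  exact: sqid (q_ge0 H1 x y) (q_ge0 H2 x y).
rewrite e; apply: ler_sum => y _; apply: hell.
- exact: q_ge0.
- exact: q_ge0.
- by move=> /qpos_W Wp; apply: (q_gt0 H2 px Wp).
Qed.

Lemma KL_ge0 k x : 0 < p x -> 0 <= KL k x.
Proof. by move=> px; apply: le_trans (KL_sq k px); apply: sumr_ge0 => y _; apply: sqr_ge0. Qed.

Lemma KL_lb k x y : 0 < p x -> (q k.+1 x y - q k.+2 x y) ^+ 2 <= 4 * KL k x.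
Proof.
move=> px; have H1 := inv k.+1; have H2 := inv k.+2.
apply: le_trans (sq4 _ _) _.
- by rewrite (q_ge0 H1) (q_le1 H1).
- by rewrite (q_ge0 H2) (q_le1 H2).
rewrite ler_wpM2l //; apply: le_trans (KL_sq k px).
by apply: (@sum_ge_term _ _ (fun y => (Num.sqrt (q k.+1 x y) - Num.sqrt (q k.+2 x y)) ^+ 2)) => z; apply: sqr_ge0.
Qed.

Lemma gam1 : 1 <= gam.
Proof. by rewrite /gam ler_pdivlMr ?subr_gt0 // mul1r lerBlDr lerDl. Qed.

Lemma sumKL_ge0 k : 0 <= \sum_x p x * KL k x.
Proof.
apply: sumr_ge0 => x _; case: (boolP (0 < p x)) => px; last by rewrite pNS // mul0r.
by rewrite mulr_ge0 ?p_ge0 ?KL_ge0.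
Qed.

Lemma G_le k : G k <= G k.+1.
Proof.
rewrite -subr_ge0 M_eq addr_ge0 ?D1_ge0 // mulr_ge0 ?sumKL_ge0 //.
by apply: le_trans ler01 gam1.
Qed.

Lemma pKL_le k x : 0 < p x -> p x * KL k x <= G k.+1 - G k.
Proof.
move=> px; rewrite M_eq.
have h1 : p x * KL k x <= \sum_x p x * KL k x.
  apply: (@sum_ge_term _ _ (fun x => p x * KL k x)) => z.
  case: (boolP (0 < p z)) => pz; last by rewrite pNS // mul0r.
  by rewrite mulr_ge0 ?p_ge0 ?KL_ge0.
have h2 := D1_ge0 k; have h3 := sumKL_ge0 k; have h4 := gam1.
have := mulr_ge0 (ltac:(by rewrite subr_ge0) : 0 <= gam - 1) h3.
move: (\sum_x p x * KL k x) h1 h3 => s h1 h3; nra.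
Qed.

Lemma E_le k : E k <= \sum_(x : X) (2 * Num.sqrt (G k.+1 - G k) / mu).
Proof.
rewrite /E; apply: ler_sum => x _.
have d0 : 0 <= G k.+1 - G k by rewrite subr_ge0 G_le.
have ss := sqr_sqrtr d0.
have hpk := @pKL_le k x.
move: (G k.+1 - G k) d0 ss hpk => d d0 ss hpk.
have s0 := sqrtr_ge0 d.
move: (Num.sqrt d) s0 ss => s s0 ss.
have m0 := mu_gt0.
case: (boolP (0 < p x)) => px; last first.
  by rewrite pNS // mul0r divr_ge0 ?mulr_ge0 // ltW.
have {}hpk := hpk px.
have H1 := inv k.+1; have H2 := inv k.+2.
set t := 2 * s / (p x * mu).
have t0 : 0 <= t by rewrite /t divr_ge0 ?mulr_ge0 // ltW // mulr_gt0.
have KL0 := KL_ge0 k px.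
have p1 := p_le1 x.
have hy : forall y, q k.+2 x y <= q k.+1 x y * (1 + t).
  move=> y; case: (tcases x y) => [p0|[[_ W0]|[_ Wp]]].
  - by move: px; rewrite p0 ltxx.
  - by rewrite (q0W k W0) (q0W k.+1 W0) mul0r.
  have hl := KL_lb k y px.
  have qm := q_mu H1 px Wp.
  move: (q k.+1 x y) (q k.+2 x y) hl qm => q1 q2 hl qm.
  have h2 : p x * (q2 - q1) <= 2 * s.
    case: (lerP (p x * (q2 - q1)) 0) => hn; first by apply: le_trans hn _; rewrite mulr_ge0.
    rewrite -ler_sqr ?nnegrE ?(ltW hn) ?mulr_ge0 //.
    have e1 : 0 <= p x ^+ 2 * (4 * KL k x - (q1 - q2) ^+ 2).
      by rewrite mulr_ge0 ?sqr_ge0 // subr_ge0.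
    have e2 : 0 <= p x * KL k x * (1 - p x) by rewrite mulr_ge0 ?mulr_ge0 ?subr_ge0 // ltW.
    nra.
  have h3 : q2 - q1 <= mu * t.
    have -> : mu * t = 2 * s / p x by rewrite /t; field; rewrite ?gt_eqF.
    by rewrite ler_pdivlMr // (mulrC _ (p x)).
  have h4 : mu * t <= q1 * t by rewrite ler_wpM2r.
  rewrite mulrDr mulr1; lra.
have hS : Sx k x <= (1 + t) `^ (a - 1).
  apply: (@le_trans _ _ (\sum_y q k.+2 x y * (1 + t) `^ (a - 1))).
    apply: ler_sum => y _.
    case: (tcases x y) => [p0|[[_ W0]|[_ Wp]]].
    - by move: px; rewrite p0 ltxx.
    - by rewrite (q0W k.+1 W0) powR0 ?an0 // !mul0r.
    have q1p := q_gt0 H1 px Wp; have q2p := q_gt0 H2 px Wp.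
    have hyy := hy y.
    move: (q k.+1 x y) (q k.+2 x y) q1p q2p hyy => q1 q2 q1p q2p hyy.
    have tp : 0 < 1 + t by lra.
    rewrite -ler_ln ?posrE ?mulr_gt0 ?powR_gt0 //.
    rewrite !lnM ?posrE ?powR_gt0 // !ln_powR.
    have h : ln q2 <= ln q1 + ln (1 + t).
      by rewrite -lnM ?posrE // ler_ln ?posrE ?mulr_gt0.
    have := ler_wpM2l (ltac:(by rewrite subr_ge0 ltW) : 0 <= a - 1) h.
    lra.
  by rewrite -mulr_suml (q_sum H2 px) mul1r.
have hS2 : (a - 1)^-1 * ln (Sx k x) <= t.
  have Sp := Sx_gt0 k px.
  have tp : 0 < 1 + t by lra.
  have h : ln (Sx k x) <= (a - 1) * ln (1 + t).
    by rewrite -ln_powR ler_ln ?posrE ?powR_gt0.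
  have := ler_wpM2l (ltac:(by rewrite invr_ge0 subr_ge0 ltW) : 0 <= (a - 1)^-1) h.
  rewrite mulrA mulVf ?a1 // mul1r => h'.
  apply: le_trans h' _; apply: le_ln1Dx; lra.
have -> : 2 * s / mu = p x * t by rewrite /t; field; rewrite ?gt_eqF.
by rewrite ler_wpM2l ?p_ge0.
Qed.

Lemma final : (fun k : nat => (FC a p W (q k.+1) (r k))%:E) @ \oo --> IC a p W.
Proof.
set C := \sum_(x : X) (2 / mu).
have hE k : E k <= C * Num.sqrt (G k.+1 - G k).
  apply: le_trans (E_le k) _; rewrite /C mulr_suml; apply: ler_sum => x _.
  by rewrite mulrAC.
have icfin : IC a p W \is a fin_num.
  have h1 := U_E 0; have h2 := L_E 0.
  rewrite fin_numElt; apply/andP; split.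
    by apply: lt_le_trans h1; exact: ltNyr.
  exact: (le_lt_trans h2 (ltry _)).
set ic := fine (IC a p W).
have hIC : IC a p W = ic%:E by rewrite fineK.
have hU k : G k <= ic by have := U_E k; rewrite hIC lee_fin.
have hL k : ic <= G k.+1 + C * Num.sqrt (G k.+1 - G k).
  have := L_E k; rewrite hIC lee_fin => h; apply: le_trans h _.
  by rewrite lerD2l hE.
have Gmono m n : (m <= n)%N -> G m <= G n.
  elim: n => [|n IH]; first by rewrite leqn0 => /eqP->.
  rewrite leq_eqVlt => /orP[/eqP->//|]; rewrite ltnS => /IH h.
  exact: le_trans h (G_le n).
have key e : 0 < e -> exists N, ic - G N < e.
  move=> e0; case: (pselect (exists N, ic - G N < e)) => // hn; exfalso.
  have hall N : e <= ic - G N.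
    by rewrite leNgt; apply/negP => h; apply: hn; exists N.
  have hb k : e <= C * Num.sqrt (G k.+1 - G k).
    by have := hall k.+1; have := hL k; lra.
  have C0 : 0 < C.
    have := hb 0%N; have := sqrtr_ge0 (G 1%N - G 0%N).
    have : 0 <= C by apply: sumr_ge0 => x _; rewrite divr_ge0 // ltW // mu_gt0.
    rewrite le_eqVlt => /orP[/eqP<-|//]; rewrite mul0r; lra.
  have hd k : (e / C) ^+ 2 <= G k.+1 - G k.
    have d0 : 0 <= G k.+1 - G k by rewrite subr_ge0 G_le.
    have h : e / C <= Num.sqrt (G k.+1 - G k) by rewrite ler_pdivrMr // mulrC hb.
    have u0 : 0 <= e / C by rewrite divr_ge0 ?ltW.
    rewrite -(sqr_sqrtr d0).
    move: (e / C) (Num.sqrt (G k.+1 - G k)) h u0 => u v h u0; nra.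
  have c0 : 0 < (e / C) ^+ 2 by rewrite exprn_gt0 // divr_gt0.
  move: ((e / C) ^+ 2) c0 hd => c c0 hd.
  have hg n : G 0%N + n%:R * c <= G n.
    elim: n => [|n IH]; first by rewrite mul0r addr0.
    have := hd n; rewrite -natr1 mulrDl mul1r; lra.
  have x0 : 0 <= (ic - G 0%N) / c by rewrite divr_ge0 ?subr_ge0 ?hU // ltW.
  have := archi_boundP x0; set n := Num.Def.archi_bound _.
  rewrite ltr_pdivrMr // => hx.
  have := hg n; have := hU n; lra.
rewrite hIC; apply: cvg_EFin; first by apply: nearW.
apply/cvgrPdist_lt => e e0; have [N hN] := key e e0.
exists N => // n /= hNn.
rewrite FC_G ger0_norm ?subr_ge0 ?hU //.
by apply: le_lt_trans hN; rewrite lerD2l lerN2 Gmono.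
Qed.

End Main.


Unset Implicit Arguments.

Theorem corollary3 (R : realType) (X Y : finType) (a : R) (p : X -> R)
    (W q0 : X -> Y -> R) :
  1 < a ->
  probvec p ->
  channel W ->
  channel q0 ->
  (forall x y, 0 < W x y -> 0 < q0 x y) ->
  (fun k : nat => (FC a p W (qiter a p W q0 k.+1) (riter a p W q0 k))%:E)
    @ \oo --> IC a p W.
Proof.
move=> ha hp hW hq0 hsupp.
exact: (final ha hp hW hq0 hsupp).
Qed.
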